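(* Let $U\in\mathcal U_n$. Among all part listings for $U$, the one that is minimal in graded reverse lexicographic order is the area sequence of a Dyck path of length $n$.
   Context: A unit interval order on $\{1,\dots,n\}$ is given by closed intervals $I_1,\dots,I_n$ of length $1$, numbered from left to right, with $i\prec j$ iff $I_i$ lies strictly to the left of $I_j$; $\mathcal U_n$ is the set of these. For a sequence $w=(w_1,\dots,w_n)$ of nonnegative integers, $P(w)$ is the poset on $\{1,\dots,n\}$ with $i\prec j$ iff $w_j-w_i\ge2$, or $w_j-w_i=1$ and $i<j$; $w$ is a part listing for $U$ if $P(w)$ is isomorphic to $U$ as a poset. Graded reverse lexicographic order on length-$n$ sequences of nonnegative integers: $(a_1,\dots,a_n)<(b_1,\dots,b_n)$ if $\sum a_i<\sum b_i$, or if the sums are equal and $a_j>b_j$ where $j$ is the first index where the sequences differ. Area sequences of Dyck paths of length $n$ are the sequences of nonnegative integers with $a_1=0$ and $a_i\le a_{i-1}+1$. *)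

(* Defs.v *)
From HB Require Import structures.
From mathcomp Require Import all_boot all_order all_algebra.
From mathcomp Require Import all_fingroup reals.
Set Implicit Arguments. Unset Strict Implicit. Unset Printing Implicit Defensive.
Import Order.TTheory GRing.Theory Num.Theory.

(* Elements {1,...,n} are represented by 'I_n = {0,...,n-1} (shift by one). *)

(* U : rel 'I_n is a unit interval order (U \in U_n): there are closed
   intervals I_i = [x i, x i + 1] numbered left to right (left endpoints
   nondecreasing), with i < j in U iff I_i lies strictly left of I_j. *)
Definition unit_interval_order (R : realType) (n : nat) (U : rel 'I_n) : Prop :=
  exists x : 'I_n -> R,
    (forall i j : 'I_n, (i <= j)%N -> (x i <= x j)%R) /\
    (forall i j : 'I_n, U i j = (x i + 1 < x j)%R).

Definition Pw (n : nat) (w : 'I_n -> nat) : rel 'I_n :=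
  fun i j => (w i + 2 <= w j)%N || ((w j == w i + 1)%N && (i < j)%N).

Definition poset_iso (n : nat) (P Q : rel 'I_n) : Prop :=
  exists f : {perm 'I_n}, forall i j, P i j = Q (f i) (f j).

Definition part_listing (n : nat) (U : rel 'I_n) (w : 'I_n -> nat) : Prop :=
  poset_iso (Pw w) U.

Definition grevlex_lt (n : nat) (a b : 'I_n -> nat) : Prop :=
  (\sum_i a i < \sum_i b i)%N \/
  ((\sum_i a i = \sum_i b i) /\
   exists j : 'I_n, (forall k : 'I_n, (k < j)%N -> a k = b k) /\ (b j < a j)%N).

Definition grevlex_le (n : nat) (a b : 'I_n -> nat) : Prop :=
  (forall i, a i = b i) \/ grevlex_lt a b.

Definition area_sequence (n : nat) (a : 'I_n -> nat) : Prop :=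
  (forall i : 'I_n, (val i = 0)%N -> a i = 0%N) /\
  (forall i j : 'I_n, val j = (val i).+1 -> (a j <= (a i).+1)%N).

(* Main.v *)
Require Import Defs.
From mathcomp Require Import all_boot all_order all_algebra.
From mathcomp Require Import reals.
From mathcomp Require Import all_fingroup zify ring lra.
From Stdlib Require Import Classical.
Import Order.TTheory GRing.Theory Num.Theory.

Lemma iso_comp n (U : rel 'I_n) (w v : 'I_n -> nat) (g : {perm 'I_n}) :
  part_listing U w -> (forall i j, Pw v i j = Pw w (g i) (g j)) ->
  part_listing U v.
Proof.
case=> f hf hg; exists (g * f)%g => i j.
by rewrite !permM hg hf.
Qed.

Lemma grevlex_contra n (w v : 'I_n -> nat) :
  grevlex_le w v -> grevlex_lt v w -> False.
Proof.
case=> [e|[lt1|[e1 [j' [a1 b1]]]]] [lt2|[e2 [j [a2 b2]]]].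
- have : \sum_i v i = \sum_i w i by apply: eq_bigr => i _; rewrite e.
  lia.
- by rewrite e ltnn in b2.
- lia.
- lia.
- lia.
- case: (ltngtP j j') => h.
  + by have := a1 _ h; lia.
  + by have := a2 _ h; lia.
  + have e : j = j' by apply: val_inj.
    subst; lia.
Qed.

Lemma ex_min_nat (P : nat -> Prop) :
  (exists m, P m) -> exists m, P m /\ forall m', P m' -> m <= m'.
Proof.
move=> [m0 Pm0]; apply: NNPP => H.
have H' : forall m, P m -> exists m', P m' /\ m' < m.
  move=> m Pm; apply: NNPP => H2; apply: H; exists m; split => // m' Pm'.
  rewrite leqNgt; apply/negP => lt; apply: H2; by exists m'.
suff : forall k m, m <= k -> ~ P m by move/(_ m0 m0 (leqnn _)).
elim=> [|k IH] m hm Pm.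
  have [m' [_ h]] := H' m Pm; lia.
have [m' [Pm' h]] := H' m Pm; apply: (IH m') => //; lia.
Qed.

Lemma ex_max_nat (P : nat -> Prop) B :
  (exists m, P m) -> (forall m, P m -> m <= B) ->
  exists m, P m /\ forall m', P m' -> m' <= m.
Proof.
move=> [m0 Pm0] hB; apply: NNPP => H.
have H' : forall m, P m -> exists m', P m' /\ m < m'.
  move=> m Pm; apply: NNPP => H2; apply: H; exists m; split => // m' Pm'.
  rewrite leqNgt; apply/negP => lt; apply: H2; by exists m'.
suff : forall k, exists m, P m /\ k <= m.
  by move=> /(_ B.+1) [m [Pm h]]; have := hB _ Pm; lia.
elim=> [|k [m [Pm h]]]; first by exists m0.
have [m' [Pm' h']] := H' m Pm; exists m'; split => //; lia.
Qed.

Lemma le_sum_one n (v : 'I_n -> nat) i : v i <= \sum_k v k.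
Proof. by rewrite (bigD1 i) //= leq_addr. Qed.

Lemma exists_min n (L : ('I_n -> nat) -> Prop) :
  (exists w, L w) -> exists w, L w /\ forall v, L v -> grevlex_le w v.
Proof.
move=> [w0 Lw0].
have [s0 [[ws [Lws es]] hs]] :=
  ex_min_nat (fun s => exists w, L w /\ \sum_i w i = s) (ex_intro _ _ (ex_intro _ w0 (conj Lw0 erefl))).
pose L0 v := L v /\ \sum_i v i = s0.
have claim : forall k, k <= n -> exists w, L0 w /\ forall v, L0 v ->
   (forall i : 'I_n, i < k -> v i = w i) \/
   (exists j : 'I_n, j < k /\ (forall i : 'I_n, i < j -> v i = w i) /\ v j < w j).
  elim=> [|k IH] hk.
    by exists ws; split => // v _; left.
  have [w [L0w hw]] := IH (ltnW hk).
  pose ik : 'I_n := Ordinal hk.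
  pose Q m := exists v, L0 v /\ (forall i : 'I_n, i < k -> v i = w i) /\ v ik = m.
  have hB : forall m, Q m -> m <= s0.
    by move=> m [v [[_ sv] [_ ev]]]; rewrite -ev -sv le_sum_one.
  have hQ : exists m, Q m by exists (w ik); exists w.
  have [m [[vs [L0vs [avs evs]]] hm]] := @ex_max_nat Q s0 hQ hB.
  exists vs; split => // v L0v.
  case: (hw v L0v) => [agr|[j [hj [aj lj]]]].
    have := hm (v ik) (ex_intro _ v (conj L0v (conj agr erefl))).
    rewrite leq_eqVlt => /orP[/eqP e|lt].
      left => i hi; case: (ltngtP i k) => h.
      - by rewrite agr // avs.
      - lia.
      - have -> : i = ik by apply: val_inj.
        by rewrite e evs.
    right; exists ik; split => //; split; last by rewrite evs.
    by move=> i hi; rewrite agr // avs.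
  right; exists j; split; first lia.
  split; last by rewrite avs //; lia.
  by move=> i hi; rewrite aj // avs //; lia.
have [w [[Lw sw] hw]] := claim n (leqnn n).
exists w; split => // v Lv.
have := hs (\sum_i v i) (ex_intro _ v (conj Lv erefl)).
rewrite leq_eqVlt => /orP[/eqP e|lt]; last by right; left; rewrite sw.
case: (hw v (conj Lv (esym e))) => [agr|[j [_ [aj lj]]]].
  by left => i; rewrite agr.
right; right; split; first by rewrite sw e.
by exists j; split => // i hi; rewrite aj.
Qed.


Lemma val_ordS n (i : 'I_n) : val (ordS i) = if i.+1 == n then 0 else i.+1.
Proof.
rewrite /= ; case: eqP => [->|h]; first by rewrite modnn.
by rewrite modn_small //; have := ltn_ord i; lia.
Qed.

Lemma min_area n (U : rel 'I_n) (w : 'I_n -> nat) :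
  part_listing U w -> (forall v, part_listing U v -> grevlex_le w v) ->
  area_sequence w.
Proof.
move=> Lw hmin; split.
  move=> i0 hi0; apply: NNPP => hne.
  pose g := perm (@ordS_inj n).
  pose v i := w (g i) - (g i == i0).
  have Lv : part_listing U v.
    apply: (@iso_comp _ _ _ _ g Lw) => i j.
    rewrite /Pw /v.
    have hg : forall k, (g k == i0) = (k.+1 == n).
      move=> k; rewrite permE -val_eqE val_ordS hi0 /=; by case: (k.+1 == n).
    have hv : forall k, val (g k) = if k.+1 == n then 0 else k.+1.
      by move=> k; rewrite permE val_ordS.
    have hw : forall k : 'I_n, k.+1 == n -> w (g k) = w i0.
      by move=> k hk; congr w; apply/eqP; rewrite hg.
    rewrite !hg !hv.
    have := ltn_ord i; have := ltn_ord j.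
    case: (boolP (i.+1 == n)) => hi; case: (boolP (j.+1 == n)) => hj.
    - rewrite (hw i hi) (hw j hj) /= => *; lia.
    - rewrite (hw i hi) /= => *. have -> : (i < j) = false by lia. have : w i0 >= 1 by lia. move: (w i0) (w (g j)) => a b. lia.
    - rewrite (hw j hj) /= => *. have -> : (i < j) = true by lia. have : w i0 >= 1 by lia. move: (w i0) (w (g i)) => a b. lia.
    - move=> /= *. move: (w (g i)) (w (g j)) => a b. lia.
  have := @grevlex_contra _ w v (hmin v Lv); apply; left.
  have e1 : \sum_i w (g i) = \sum_i w i by rewrite [RHS](reindex_inj (@perm_inj _ g)).
  have e2 : \sum_i w i = w i0 + \sum_(i | i != i0) w i by rewrite (bigD1 i0).
  have e3 : \sum_i v i = \sum_i (w i - (i == i0)).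
    by rewrite [RHS](reindex_inj (@perm_inj _ g)).
  have e4 : \sum_i (w i - (i == i0)) = (w i0 - 1) + \sum_(i | i != i0) w i.
    rewrite (bigD1 i0) //= eqxx; congr (_ + _); apply: eq_bigr => i hi.
    by rewrite (negbTE hi) subn0.
  lia.
move=> i j hij; rewrite leqNgt; apply/negP => hlt.
pose t := tperm i j.
pose v k := w (t k).
have hij' : i != j by apply/eqP => e; subst; lia.
have Lv : part_listing U v.
  apply: (@iso_comp _ _ _ _ t Lw) => k l.
  rewrite /Pw /v; congr (_ || _).
  have nv : forall a b : 'I_n, a <> b -> nat_of_ord a <> nat_of_ord b.
    by move=> a b h e; apply: h; apply: val_inj.
  have ev : forall a b : 'I_n, a = b -> nat_of_ord a = nat_of_ord b by move=> a b ->.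
  have hij2 : nat_of_ord j = (nat_of_ord i).+1 := hij.
  have hj := ltn_ord j.
  rewrite /t; case: (tpermP i j k) => [hk|hk|hk hk2]; case: (tpermP i j l) => [hl|hl|hl hl2];
    case E: (_ == _) => //=;
    repeat match goal with
    | H : _ = _ |- _ => move/ev: H => H
    | H : _ <> _ |- _ => move/nv: H => H
    end; move/eqP: E => E; lia.
have := @grevlex_contra _ w v (hmin v Lv); apply; right; split.
  by rewrite [RHS](reindex_inj (@perm_inj _ t)).
exists i; split; last by rewrite /v tpermL; lia.
have hij3 : nat_of_ord j = (nat_of_ord i).+1 := hij.
move=> k hk; rewrite /v tpermD //; apply/eqP => e; subst; lia.
Qed.

Set Implicit Arguments. Unset Strict Implicit. Unset Printing Implicit Defensive.
Section Ex.
Local Open Scope ring_scope.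


Definition lex3 (R : realDomainType) (f1 : R) (u1 v1 : nat) (f2 : R) (u2 v2 : nat) : bool :=
  (f1 < f2) || ((f1 == f2) && ((u2 < u1)%N || ((u1 == u2) && (v1 < v2)%N))).

Lemma lex3_trans (R : realDomainType) f1 u1 v1 f2 u2 v2 f3 u3 v3 :
  @lex3 R f1 u1 v1 f2 u2 v2 -> lex3 f2 u2 v2 f3 u3 v3 -> lex3 f1 u1 v1 f3 u3 v3.
Proof.
rewrite /lex3 => /orP[h1|/andP[/eqP e1 h1]] /orP[h2|/andP[/eqP e2 h2]].
- by rewrite (lt_trans h1 h2).
- by rewrite -e2 h1.
- by rewrite e1 h2.
- rewrite e1 e2 eqxx /=; apply/orP; right; lia.
Qed.

Lemma lex3_irr (R : realDomainType) f u v : @lex3 R f u v f u v = false.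
Proof. rewrite /lex3 ltxx /=; lia. Qed.

Lemma lex3_total (R : realDomainType) f1 u1 v1 f2 u2 v2 : v1 != v2 ->
  @lex3 R f1 u1 v1 f2 u2 v2 || lex3 f2 u2 v2 f1 u1 v1.
Proof.
move=> hv; rewrite /lex3; case: (ltgtP f1 f2) => //=; rewrite ?eqxx /=; lia.
Qed.

Section Exist.
Variables (R : realType) (n : nat) (x : 'I_n -> R).

Let S := \sum_k `|x k|.
Let y k := x k + S.
Let W k := Num.trunc (y k).
Let F k := y k - (W k)%:R.

Lemma y_ge0 k : 0 <= y k.
Proof.
rewrite /y /S (bigD1 k) //=.
have h1 := ler_norm (- x k); rewrite normrN in h1.
have h2 : 0 <= \sum_(i | i != k) `|x i| by apply: sumr_ge0 => i _.
lra.
Qed.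

Lemma F_bounds k : 0 <= F k < 1.
Proof.
have /andP[a b] := truncn_itv (y_ge0 k).
rewrite /F /W; rewrite -natr1 in b; apply/andP; split; lra.
Qed.

Definition keylt a b := lex3 (F a) (W a) (val a) (F b) (W b) (val b).

Lemma keylt_trans a b c : keylt a b -> keylt b c -> keylt a c.
Proof. exact: lex3_trans. Qed.

Lemma keylt_irr a : keylt a a = false.
Proof. exact: lex3_irr. Qed.

Lemma keylt_total a b : a != b -> keylt a b || keylt b a.
Proof. by move=> h; apply: lex3_total. Qed.

Definition rk a := #|[set c | keylt c a]|.

Lemma rk_mono a b : keylt a b -> (rk a < rk b)%N.
Proof.
move=> hab; apply: proper_card; apply/properP; split.
  by apply/subsetP => c; rewrite !inE => h; apply: keylt_trans h hab.
by exists a; rewrite inE ?keylt_irr.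
Qed.

Lemma rk_lt a : (rk a < n)%N.
Proof.
suff: (rk a < #|[set: 'I_n]|)%N by rewrite cardsT card_ord.
apply: proper_card; apply/properP; split.
  exact: subsetT.
by exists a; rewrite !inE ?keylt_irr.
Qed.

Lemma rkE a b : keylt a b = (rk a < rk b)%N.
Proof.
apply/idP/idP; first exact: rk_mono.
move=> h; case: (eqVneq a b) => [e|ne]; first by subst; rewrite ltnn in h.
case/orP: (keylt_total ne) => // /rk_mono; lia.
Qed.

Definition rko a : 'I_n := Ordinal (rk_lt a).

Lemma rko_inj : injective rko.
Proof.
move=> a b /(congr1 val) /= e; apply/eqP; apply/negP => /negP ne.
by case/orP: (keylt_total ne); rewrite rkE e ltnn.
Qed.

Lemma exists_listing (U : rel 'I_n) :
  (forall i j : 'I_n, U i j = (x i + 1 < x j)) ->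
  exists w, part_listing U w.
Proof.
move=> hU.
pose rho := perm rko_inj.
pose f := (rho^-1)%g.
exists (fun i => W (f i)); exists f => i j.
rewrite hU /Pw.
have hij : (i < j)%N = keylt (f i) (f j).
  have ei : rho (f i) = i := permKV rho i.
  have ej : rho (f j) = j := permKV rho j.
  by rewrite rkE -{1}ei -{1}ej !permE.
rewrite hij; move: (f i) (f j) => a b.
have Fa := F_bounds a; have Fb := F_bounds b.
have ya : y a = (W a)%:R + F a by rewrite /F; ring.
have yb : y b = (W b)%:R + F b by rewrite /F; ring.
have xab : (x a + 1 < x b) = (y a + 1 < y b).
  by apply/idP/idP; rewrite /y => h; lra.
rewrite xab ya yb.
case: (leqP (W a + 2) (W b)) => h.
  have : (W a)%:R + 2 <= (W b)%:R :> R by rewrite -(natrD R) ler_nat.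
  move=> h'; symmetry; rewrite /=; apply/idP; lra.
rewrite /=; case E: (W b == W a + 1)%N => /=.
  have e : (W b)%:R = (W a)%:R + 1 :> R by move/eqP: E => ->; rewrite natrD.
  rewrite /keylt /lex3.
  have -> : (W b < W a)%N = false by lia.
  have -> : (W a == W b) = false by lia.
  rewrite andbF orbF.
  by apply/idP/idP => h'; lra.
have : (W b)%:R <= (W a)%:R :> R by rewrite ler_nat; lia.
move=> h'; symmetry; apply/negbTE; rewrite -leNgt; lra.
Qed.

End Exist.

End Ex.

Theorem mainTheorem10 (R : realType) (n : nat) (U : rel 'I_n) :
  unit_interval_order R U ->
  exists w : 'I_n -> nat,
    part_listing U w /\
    (forall v : 'I_n -> nat, part_listing U v -> grevlex_le w v) /\
    area_sequence w.
Proof.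
case=> x [_ hU].
have [w [Lw hw]] := @exists_min _ (part_listing U) (exists_listing hU).
by exists w; split => //; split => //; exact: (@min_area _ U w Lw hw).
Qed.
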